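(* Let $X$ be a Calabi–Yau 4-fold, $\beta\in H_2(X,\mathbb{Z})$ and $\alpha\in H^2(X)$ with $\alpha\cdot\beta=0$. Then the identity \[ n_{0,\beta}(\alpha^2)=\frac{1}{2}\sum_{\substack{\beta_1+\beta_2=\beta\\ \beta_1,\beta_2>0}}(\alpha\cdot\beta_1)(\alpha\cdot\beta_2)\,m_{\beta_1,\beta_2} \] is equivalent to the identity \[ n_{0,\beta}(\alpha^2)=\frac{1}{2}\sum_{\substack{k_1,k_2\in\mathbb{Z}_{>0}\\ \gcd(k_1,k_2)=1}}\ \sum_{\substack{\beta_1+\beta_2=\beta\\ k_1\mid\beta_1,\ k_2\mid\beta_2}}\ \sum_{a,b}\frac{(\alpha\cdot\beta_1)(\alpha\cdot\beta_2)}{k_1^2k_2^2}\,n_{0,\beta_1/k_1}(S_a)\,g^{ab}\,n_{0,\beta_2/k_2}(S_b), \] where $\{S_a\}$ is a basis of the free part of $H^4(X,\mathbb{Z})$.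
   Context: A Calabi–Yau 4-fold is a smooth complex projective 4-fold with $K_X\cong\mathcal{O}_X$. Fix an ample class; $\beta>0$ means nonzero of positive degree; sums over $\beta_1+\beta_2=\beta$ run over $\beta_1,\beta_2>0$, and $k\mid\beta_i$ means $\beta_i/k\in H_2(X,\mathbb{Z})$. $\mathrm{GW}_{0,\beta}(\gamma)=\int_{[\overline{M}_{0,1}(X,\beta)]^{\mathrm{vir}}}\mathrm{ev}^*\gamma$ for $\gamma\in H^4(X)$, and $n_{0,\beta}(\gamma)$ is defined by $\sum_{\beta>0}\mathrm{GW}_{0,\beta}(\gamma)q^\beta=\sum_{\beta>0}n_{0,\beta}(\gamma)\sum_{d\ge1}d^{-2}q^{d\beta}$ (extended linearly in $\gamma$). $\sum_{a,b}g^{ab}S_a\otimes S_b$ is the Künneth decomposition of the $(4,4)$-component of the diagonal class mod torsion, i.e. $(g^{ab})$ is the inverse of $(g_{ab})=(\int_XS_aS_b)$. The meeting invariants $m_{\beta_1,\beta_2}$ are determined by: symmetry; $m_{\beta_1,\beta_2}=0$ if $\deg\beta_1\le0$ or $\deg\beta_2\le0$; for $\beta_1\ne\beta_2$, $m_{\beta_1,\beta_2}=\sum n_{0,\beta_1}(S_a)g^{ab}n_{0,\beta_2}(S_b)+m_{\beta_1,\beta_2-\beta_1}+m_{\beta_1-\beta_2,\beta_2}$; $m_{\beta,\beta}=n_{0,\beta}(c_2(X))+\sum n_{0,\beta}(S_a)g^{ab}n_{0,\beta}(S_b)-\sum_{\beta_1+\beta_2=\beta}m_{\beta_1,\beta_2}$.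 *)

(* Defs.v *)
From HB Require Import structures.
From mathcomp Require Import all_boot all_order all_algebra.
From mathcomp Require Import boolp classical_sets functions cardinality fsbigop.
Set Implicit Arguments. Unset Strict Implicit. Unset Printing Implicit Defensive.
Import Order.TTheory GRing.Theory Num.Theory.
Local Open Scope ring_scope.

(* Abstract cohomological data of a Calabi--Yau 4-fold X.
   - H_2(X,Z) (mod torsion) = 'rV[int]_r  (coordinates in a Z-basis);
   - H^2(X) = 'rV[F]_r in the dual basis, so alpha.beta = sum_i alpha_i beta_i;
   - the free part of H^4(X,Z) has basis S_0..S_{p-1}; H^4(X) = 'rV[F]_p;
   - omega : 'rV[int]_r is the fixed (integral) ample class.               *)

Definition H2 (r : nat) := 'rV[int]_r.

Definition deg (r : nat) (omega : 'rV[int]_r) (b : 'rV[int]_r) : int :=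
  \sum_(i < r) omega ord0 i * b ord0 i.

Definition cpos (r : nat) (omega : 'rV[int]_r) (b : 'rV[int]_r) : Prop :=
  b != 0 /\ (0 < deg omega b)%R.

Definition pairing (F : numFieldType) (r : nat) (alpha : 'rV[F]_r)
  (b : 'rV[int]_r) : F := \sum_(i < r) alpha ord0 i * (b ord0 i)%:~R.

(* alpha^2 in H^4(X), given the cup products cup i j = e_i . e_j in H^4(X) *)
Definition sq_class (F : numFieldType) (r p : nat)
  (cup : 'I_r -> 'I_r -> 'rV[F]_p) (alpha : 'rV[F]_r) : 'rV[F]_p :=
  \sum_(i < r) \sum_(j < r) (alpha ord0 i * alpha ord0 j) *: cup i j.

Definition dvdv (r : nat) (k : nat) (b : 'rV[int]_r) : Prop :=
  forall i, (k%:Z %| b ord0 i)%Z.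

Definition divv (r : nat) (k : nat) (b : 'rV[int]_r) : 'rV[int]_r :=
  map_mx (fun z : int => (z %/ k%:Z)%Z) b.

(* extension by linearity: value of a family (x a = x(S_a)) on a class gamma *)
Definition linH4 (F : numFieldType) (p : nat) (x : 'I_p -> F) (g : 'rV[F]_p) : F :=
  \sum_(a < p) g ord0 a * x a.

(* (g^{ab}) = inverse of the intersection matrix (g_{ab}) = (int S_a S_b) *)
Definition ginv (F : numFieldType) (p : nat) (G : 'M[int]_p) : 'M[F]_p :=
  invmx (map_mx (fun z : int => z%:~R) G).

Definition gpair (F : numFieldType) (p : nat) (G : 'M[int]_p)
  (x y : 'I_p -> F) : F :=
  \sum_(a < p) \sum_(b < p) x a * ginv F G a b * y b.

(* Main.v *)
Require Import Defs.
From HB Require Import structures.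
From mathcomp Require Import all_boot all_order all_algebra.
From mathcomp Require Import boolp classical_sets functions cardinality fsbigop.
From mathcomp Require Import zify ring lra.
Import Order.TTheory GRing.Theory Num.Theory.
Local Open Scope classical_set_scope.
Local Open Scope ring_scope.
Set Implicit Arguments. Unset Strict Implicit. Unset Printing Implicit Defensive.

Lemma zmuln (z : int) k : (z *+ k) = z * k%:Z.
Proof. by rewrite -natz mulr_natr. Qed.

Section Vec.
Variables (r : nat) (omega : 'rV[int]_r).

Lemma deg_add x y : deg omega (x + y) = deg omega x + deg omega y.
Proof. by rewrite /deg -big_split; apply: eq_bigr => i _; rewrite mxE mulrDr. Qed.

Lemma deg0 : deg omega 0 = 0.
Proof. by rewrite /deg big1 // => i _; rewrite mxE mulr0. Qed.

Lemma deg_opp x : deg omega (- x) = - deg omega x.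
Proof. by rewrite /deg -sumrN; apply: eq_bigr => i _; rewrite mxE mulrN. Qed.

Lemma deg_sub x y : deg omega (x - y) = deg omega x - deg omega y.
Proof. by rewrite deg_add deg_opp. Qed.

Lemma deg_muln x k : deg omega (x *+ k) = deg omega x *+ k.
Proof. by elim: k => [|k IH]; rewrite ?mulr0n ?deg0 // !mulrS deg_add IH. Qed.

Lemma cposE b : cpos omega b <-> 0 < deg omega b.
Proof.
split => [[]//|h]; split => //; apply/eqP => b0; move: h; by rewrite b0 deg0.
Qed.

Variable (F : numFieldType) (alpha : 'rV[F]_r).
Lemma pairing_add x y : pairing alpha (x + y) = pairing alpha x + pairing alpha y.
Proof. by rewrite /pairing -big_split; apply: eq_bigr => i _; rewrite mxE intrD mulrDr. Qed.
Lemma pairing0 : pairing alpha 0 = 0.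
Proof. by rewrite /pairing big1 // => i _; rewrite mxE mulr0. Qed.
Lemma pairing_muln x k : pairing alpha (x *+ k) = pairing alpha x *+ k.
Proof. by elim: k => [|k IH]; rewrite ?mulr0n ?pairing0 // !mulrS pairing_add IH. Qed.

Lemma divv_muln k (c : 'rV[int]_r) : (0 < k)%N -> divv k (c *+ k) = c.
Proof.
move=> k0; apply/rowP => i; rewrite !mxE mulmxnE zmuln mulzK //.
by rewrite eqz_nat -lt0n.
Qed.
Lemma divvK k (b : 'rV[int]_r) : dvdv k b -> (divv k b) *+ k = b.
Proof. by move=> h; apply/rowP => i; rewrite mulmxnE mxE zmuln divzK. Qed.
Lemma dvdv_muln k (c : 'rV[int]_r) : dvdv k (c *+ k).
Proof. by move=> i; rewrite mulmxnE zmuln; apply: dvdz_mull; exact: dvdzz. Qed.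
Lemma muln_inj k (x y : 'rV[int]_r) : (0 < k)%N -> x *+ k = y *+ k -> x = y.
Proof. by move=> k0 e; rewrite -(divv_muln x k0) e divv_muln. Qed.
End Vec.

Section FS.
Variable R : numFieldType.

Lemma fsum_fiber (I J : choiceType) (A : set I) (B : set J) (phi : J -> I)
  (f : I -> J -> R) :
  finite_set [set j | B j /\ A (phi j)] ->
  \sum_(i \in A) \sum_(j \in [set j | B j /\ phi j = i]) f i j
  = \sum_(j \in [set j | B j /\ A (phi j)]) f (phi j) j.
Proof.
set C := [set j | B j /\ A (phi j)] => Cfin.
have iCfin : finite_set (phi @` C) by apply: finite_image.
rewrite -(fsbig_widen (phi @` C) A); first last.
- move=> i [Ai nC]; apply: fsbig1 => j [Bj eq]; exfalso; apply: nC.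
  by exists j => //; split=> //; rewrite eq.
- by move=> _ [j [Bj Aj] <-].
transitivity (\sum_(i \in phi @` C) \sum_(j \in C)
   (if j \in [set j | phi j = i] then f i j else 0)).
  apply: eq_fsbigr => i; rewrite in_setE => -[j0 [_ Aj0] <-].
  rewrite -fsbig_mkcondr; apply: eq_fsbigl; apply/seteqP; split.
    by move=> j /= [Bj e]; split=> //; split => //; rewrite e.
  by move=> j [[Bj _] /= <-].
rewrite exchange_fsbig //; apply: eq_fsbigr => j Cj. idtac.
transitivity (\sum_(i \in phi @` C) (if i \in [set phi j] then f i j else 0)).
  apply: eq_fsbigr => i _.
  case: (pselect (phi j = i)) => [e|ne].
    by rewrite ifT ?ifT //; apply: mem_set.
  have h1 : (j \in [set j | phi j = i]) = false.
    by apply/negbTE/negP => /set_mem /= e.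
  have h2 : (i \in [set phi j]) = false.
    by apply/negbTE/negP => /set_mem /= e; apply: ne; rewrite e.
  by rewrite h1 h2.
rewrite -fsbig_mkcondr setIidr ?fsbig_set1 // => _ ->; exists j => //; exact: set_mem.
Qed.

Lemma fsum_sigma (I J : choiceType) (A : set I) (B : I -> set J)
  (f : I -> J -> R) :
  finite_set [set p : I * J | A p.1 /\ B p.1 p.2] ->
  \sum_(i \in A) \sum_(j \in B i) f i j
  = \sum_(p \in [set p : I * J | A p.1 /\ B p.1 p.2]) f p.1 p.2.
Proof.
move=> fin.
have -> : [set p : I * J | A p.1 /\ B p.1 p.2]
   = [set p | [set p : I * J | B p.1 p.2] p /\ A (fst p)].
  by apply/seteqP; split => -[i j] /= [].
rewrite -(@fsum_fiber _ _ A [set p : I * J | B p.1 p.2] fst (fun i p => f i p.2)); last first.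
  by apply: sub_finite_set fin => -[i j] /= [].
apply: eq_fsbigr => i _.
rewrite (reindex_fsbig (fun j => (i, j)) (B i)) /=; last split. reflexivity.
- by move=> j /= Bj; split.
- by move=> j1 j2 _ _ [].
- by move=> [i' j] /= [Bj eq]; exists j => //; rewrite -eq in Bj *.
Qed.
End FS.

Module NatPart.
Local Open Scope nat_scope.
Definition Mat := ((nat * nat) * (nat * nat))%type.
Definition unimod (M : Mat) : Prop := M.1.1 * M.2.2 = M.1.2 * M.2.1 + 1.
Definition Id2 : Mat := ((1, 0), (0, 1)).

Lemma det1_pos (M : Mat) : unimod M -> 0 < M.1.1 /\ 0 < M.2.2.
Proof. case: M => [[a b] [c d]]; rewrite /unimod /= => h; nia. Qed.

Lemma det1_cases (M : Mat) : unimod M ->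
  M = Id2 \/ (M.1.1 <= M.1.2 /\ M.2.1 <= M.2.2) \/ (M.1.2 <= M.1.1 /\ M.2.2 <= M.2.1).
Proof.
case: M => [[a b] [c d]]; rewrite /unimod /Id2 /= => h.
case: (leqP a b) => hab; case: (leqP c d) => hcd.
- by right; left.
- exfalso. have : a * d <= b * c by apply: leq_mul => //; lia. lia.
- case: (ltngtP c d) => hcd'; last by right; right; split; lia.
    2: lia.
  have hb : a * d >= (b + 1) * (c + 1) by apply: leq_mul; lia.
  have [-> ->] : b = 0 /\ c = 0 by nia.
  have [-> ->] : a = 1 /\ d = 1 by nia. by left.
- right; right; split; lia.
Qed.

Lemma det1_coprime (M : Mat) : unimod M -> coprime (M.1.1 + M.1.2) (M.2.1 + M.2.2).
Proof.
case: M => [[a b] [c d]]; rewrite /unimod /= => h.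
have e : a * (c + d) = c * (a + b) + 1.
  by rewrite mulnDr h mulnDr (mulnC c a) (mulnC c b) addnA.
rewrite /coprime; apply/eqP; apply/eqP; rewrite -dvdn1.
have h1 : gcdn (a + b) (c + d) %| a * (c + d) by apply: dvdn_mull; apply: dvdn_gcdr.
have h2 : gcdn (a + b) (c + d) %| c * (a + b) by apply: dvdn_mull; apply: dvdn_gcdl.
by rewrite e dvdn_addr in h1.
Qed.

Lemma det1_uniq_aux a b c d a' b' c' d' :
  a * d = b * c + 1 -> a' * d' = b' * c' + 1 ->
  a + b = a' + b' -> c + d = c' + d' -> a' <= a -> a = a' /\ c = c'.
Proof.
move=> h h' e1 e2 le.
set k1 := a + b. set k2 := c + d.
have cop : coprime k1 k2 by exact: (@det1_coprime ((a, b), (c, d))).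
have E : a * k2 = c * k1 + 1.
  by rewrite /k1 /k2 mulnDr h mulnDr (mulnC c a) (mulnC c b) addnA.
have E' : a' * k2 = c' * k1 + 1.
  by rewrite /k1 /k2 e1 e2 mulnDr h' mulnDr (mulnC c' a') (mulnC c' b') addnA.
have [/= pa _] := det1_pos (M := ((a, b), (c, d))) h.
have k1p : 0 < k1 by rewrite /k1; lia.
have ec : c' <= c.
  have : a' * k2 <= a * k2 by rewrite leq_mul2r le orbT.
  by rewrite E E' leq_add2r leq_pmul2r.
have e : (a - a') * k2 = (c - c') * k1 by rewrite !mulnBl; lia.
have dv : k1 %| a - a'.
  by rewrite -(Gauss_dvdl _ cop) e dvdn_mull.
have [/= pa' _] := det1_pos (M := ((a', b'), (c', d'))) h'.
have lt : a - a' < k1 by rewrite /k1; lia.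
have z : a - a' = 0.
  by move/eqP: dv; rewrite modn_small // => /eqP.
have ea : a = a' by lia.
split=> //; rewrite ea in E; have : c * k1 = c' * k1 by lia.
move/eqP; rewrite eqn_mul2r => /orP [/eqP k0|/eqP //]; lia.
Qed.

Lemma det1_uniq (M M' : Mat) : unimod M -> unimod M' ->
  M.1.1 + M.1.2 = M'.1.1 + M'.1.2 -> M.2.1 + M.2.2 = M'.2.1 + M'.2.2 -> M = M'.
Proof.
case: M => [[a b] [c d]]; case: M' => [[a' b'] [c' d']]; rewrite /unimod /= => h h' e1 e2.
have [ea ec] : a = a' /\ c = c'.
  case: (leqP a' a) => le; first exact: det1_uniq_aux h h' e1 e2 le.
  have [] := det1_uniq_aux h' h (esym e1) (esym e2) (ltnW le); split; congruence.
have eb : b = b' by lia. have ed : d = d' by lia.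
by rewrite ea eb ec ed.
Qed.

Lemma det1_exists k1 k2 : 0 < k1 -> 0 < k2 -> coprime k1 k2 ->
  exists M : Mat, unimod M /\ M.1.1 + M.1.2 = k1 /\ M.2.1 + M.2.2 = k2.
Proof.
move=> k1p k2p cop.
have [a0 lt dv] := Bezoutl k2 k1p.
move: dv; rewrite (eqP cop) => dv.
set t := (1 + a0 * k2) %/ k1.
have et : t * k1 = 1 + a0 * k2 by rewrite divnK.
have tle : t <= k2.
  rewrite -(leq_pmul2r k1p) et mulnC.
  have : a0 * k2 <= (k1 - 1) * k2 by rewrite leq_mul2r; apply/orP; right; lia.
  rewrite mulnBl mul1n => h1.
  have : k2 <= k1 * k2 by rewrite leq_pmull.
  lia.
exists ((k1 - a0, a0), (k2 - t, t)); rewrite /unimod /=; split; last by split; lia.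
rewrite !mulnBl !mulnBr (mulnC k1 t) et. have : a0 * t <= a0 * k2 by rewrite leq_mul2l tle orbT. lia.
Qed.

End NatPart.
Import NatPart.

Lemma weight_id (F : numFieldType) (w1 w2 : F) (a b c d : nat) :
  (a * d = b * c + 1)%N -> w1 *+ (a + b) + w2 *+ (c + d) = 0 ->
  (w1 *+ (a + b)) * (w2 *+ (c + d)) / (((a + b) ^ 2 * (c + d) ^ 2)%N)%:R
  = (w1 *+ a + w2 *+ c) * (w1 *+ b + w2 *+ d).
Proof.
move=> hd h.
have [/= a0 d0] := det1_pos (M := ((a, b), (c, d))) hd.
have k1 : (a + b)%:R != 0 :> F by rewrite pnatr_eq0; lia.
have k2 : (c + d)%:R != 0 :> F by rewrite pnatr_eq0; lia.
have HD : (a%:R * d%:R = b%:R * c%:R + 1 :> F).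
  by have := congr1 (fun z => z%:R : F) hd; rewrite /= natrD !natrM.
have m1 : forall (x : F) k, x *+ k = x * k%:R by move=> x k; rewrite mulr_natr.
rewrite !(m1 w1) !(m1 w2) in h *; rewrite natrM !natrX.
move: k1 k2 h; rewrite !natrD => k1 k2 h.
set A := a%:R in HD h k1 *; set B := b%:R in HD h k1 *.
set C := c%:R in HD h k2 *; set D := d%:R in HD h k2 *.
have e1 : (C + D) * (w1 * A + w2 * C) = w1.
  have -> : (C + D) * (w1 * A + w2 * C) =
    w1 + w1 * (A * D - (B * C + 1)) + C * (w1 * (A + B) + w2 * (C + D)) by ring.
  by rewrite h HD subrr; ring.
have e2 : (C + D) * (w1 * B + w2 * D) = - w1.
  have -> : (C + D) * (w1 * B + w2 * D) =
    - w1 - w1 * (A * D - (B * C + 1)) + D * (w1 * (A + B) + w2 * (C + D)) by ring.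
  by rewrite h HD subrr; ring.
have ew2 : w2 * (C + D) = - (w1 * (A + B)) by apply/eqP; rewrite -addr_eq0 addrC h.
have x1 : w1 * A + w2 * C = w1 / (C + D).
  by apply: (mulfI k2); rewrite e1 [RHS]mulrC divfK.
have x2 : w1 * B + w2 * D = - w1 / (C + D).
  by apply: (mulfI k2); rewrite e2 [RHS]mulrC divfK.
rewrite x1 x2 ew2; field.
by rewrite k1 k2.
Qed.

Section Main.
Variables (F : numFieldType) (r p : nat) (omega : 'rV[int]_r) (G : 'M[int]_p).
Variables (gw n : 'rV[int]_r -> 'I_p -> F) (m : 'rV[int]_r -> 'rV[int]_r -> F).
Variables (alpha : 'rV[F]_r) (beta : 'rV[int]_r).
Local Notation V := 'rV[int]_r.
Local Notation dg := (deg omega).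
Hypothesis Hgrom : forall D : int, finite_set
     [set b : 'rV[int]_r | cpos omega b /\ deg omega b <= D /\
                          exists a, gw b a != 0].
Hypothesis Hmc : forall b, cpos omega b -> forall a,
     gw b a = \sum_(dc \in [set dc : nat * 'rV[int]_r |
                    (0 < dc.1)%N /\ cpos omega dc.2 /\ dc.2 *+ dc.1 = b])
                (dc.1 ^ 2)%:R^-1 * n dc.2 a.

Hypothesis Hm0 : forall b1 b2, deg omega b1 <= 0 \/ deg omega b2 <= 0 -> m b1 b2 = 0.
Hypothesis Hrec : forall b1 b2, cpos omega b1 -> cpos omega b2 -> b1 <> b2 ->
     m b1 b2 = gpair G (n b1) (n b2) + m b1 (b2 - b1) + m (b1 - b2) b2.

Hypothesis Hab : pairing alpha beta = 0.

Definition Nz (x : V) := exists a, n x a != 0.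

Lemma le_mulrn (z : int) d : 0 < z -> (0 < d)%N -> z <= z *+ d.
Proof. move=> h1 h2; rewrite zmuln; nia. Qed.
Lemma nat_le_mulrn (z : int) d : 0 < z -> d%:Z <= z *+ d.
Proof. move=> h1; rewrite zmuln; nia. Qed.

Lemma nz_cover (N : nat) b a : cpos omega b -> dg b <= N%:Z -> n b a != 0 ->
  exists d c, (0 < d)%N /\ cpos omega c /\ c *+ d = b /\ gw c a != 0.
Proof.
elim: N b => [|N IH] b cb db nb.
  by move/cposE: cb => cb; exfalso; lia.
case: (eqVneq (gw b a) 0) => gw0; last by exists 1%N, b; rewrite mulr1n.
case: (pselect (exists dc : nat * V, (0 < dc.1)%N /\ cpos omega dc.2 /\
   dc.2 *+ dc.1 = b /\ dc.1 != 1%N /\ n dc.2 a != 0)).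
  move=> [[d c] /= [d0 [cc [e [d1 nc]]]]].
  have cc' := cc; move/cposE: cc' => cc'.
  have dc : dg c <= N%:Z.
    have : dg b = dg c *+ d by rewrite -e deg_muln.
    rewrite zmuln => eb.
    have d2 : (2 <= d)%N by lia.
    nia.
  have [d' [c' [d'0 [cc2 [e' gc']]]]] := IH c cc dc nc.
  exists (d' * d)%N, c'; split; first by rewrite muln_gt0 d'0 d0.
  by split=> //; split=> //; rewrite mulrnA e' e.
move=> nex; exfalso; move/eqP: nb; apply.
move: gw0; rewrite Hmc //.
rewrite -(fsbig_widen [set (1%N, b)]); first last.
- move=> [d c] /= [[d0 [cc e]] ne]; apply/eqP; rewrite mulf_eq0; apply/orP; right.
  apply/negPn/negP => nc; apply: nex; exists (d, c) => /=; split=> //; split=> //.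
  split=> //; split=> //; apply/negP => /eqP d1; apply: ne.
  by rewrite d1 /= in e *; rewrite -e mulr1n.
- by move=> _ ->; split=> //; split=> //; rewrite mulr1n.
by rewrite fsbig_set1 /= invr1 mul1r.
Qed.

Definition U (D : int) := [set c : V | cpos omega c /\ dg c <= D /\ Nz c].

Lemma finU D : finite_set (U D).
Proof.
apply: (sub_finite_set _ (finite_image (fun dc : nat * V => dc.2 *+ dc.1)
   (finite_setX (finite_II `|D|.+1) (Hgrom D)))).
move=> c [cc [cD [a na]]].
have cc' := cc; move/cposE: cc' => cc'.
have [d [c' [d0 [cc1 [e gc]]]]] := nz_cover (N := `|dg c|%N) cc (ltac:(lia)) na.
have cc1' := cc1; move/cposE: cc1' => cc1'.
have E : dg c = dg c' *+ d by rewrite -e deg_muln.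
exists (d, c') => //; split => /=.
  have := nat_le_mulrn d cc1'; rewrite -E => h; lia.
split=> //; split; last by exists a.
by have := le_mulrn cc1' d0; lia.
Qed.

Definition Dint := dg beta.
Definition GD (g : V * V) := cpos omega g.1 /\ cpos omega g.2 /\
  dg g.1 <= Dint /\ dg g.2 <= Dint /\ Nz g.1 /\ Nz g.2.

Lemma finGD : finite_set GD.
Proof.
apply: (sub_finite_set _ (finite_setX (finU Dint) (finU Dint))).
by move=> [x y] [cx [cy [dx [dy [nx ny]]]]].
Qed.

Definition act (g : V * V) (M : Mat) : V * V :=
  (g.1 *+ M.1.1 + g.2 *+ M.2.1, g.1 *+ M.1.2 + g.2 *+ M.2.2).

Definition Nf (g : V * V) := gpair G (n g.1) (n g.2).

Lemma Nf0 g : ~ (Nz g.1 /\ Nz g.2) -> Nf g = 0.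
Proof.
move=> h; rewrite /Nf /gpair.
case: (pselect (Nz g.1)) => h1.
  have h2 : forall b, n g.2 b = 0.
    by move=> b; apply/eqP/negPn/negP => hb; apply: h; split=> //; exists b.
  by apply: big1 => a _; apply: big1 => b _; rewrite h2 mulr0.
have h2 : forall b, n g.1 b = 0.
  by move=> b; apply/eqP/negPn/negP => hb; apply: h1; exists b.
by apply: big1 => a _; apply: big1 => b _; rewrite h2 !mul0r.
Qed.

Lemma act_deg g M : dg (act g M).1 = dg g.1 *+ M.1.1 + dg g.2 *+ M.2.1 /\
  dg (act g M).2 = dg g.1 *+ M.1.2 + dg g.2 *+ M.2.2.
Proof. by rewrite /act /= !deg_add !deg_muln. Qed.

Lemma act_bound g M : cpos omega g.1 -> cpos omega g.2 ->
  [/\ M.1.1%:Z <= dg (act g M).1, M.2.1%:Z <= dg (act g M).1,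
      M.1.2%:Z <= dg (act g M).2 & M.2.2%:Z <= dg (act g M).2].
Proof.
move=> /cposE c1 /cposE c2; have [-> ->] := act_deg g M; rewrite !zmuln.
split; nia.
Qed.

Lemma act_cpos g M : cpos omega g.1 -> cpos omega g.2 -> unimod M ->
  cpos omega (act g M).1 /\ cpos omega (act g M).2.
Proof.
move=> c1 c2 dM; have [a0 d0] := det1_pos dM.
move/cposE: (c1) => c1'; move/cposE: (c2) => c2'.
rewrite !cposE; have [-> ->] := act_deg g M; rewrite !zmuln; split; nia.
Qed.

Definition KD := `|Dint|.+1.
Definition Box (K : nat) : set Mat := (`I_K `*` `I_K) `*` (`I_K `*` `I_K).

Lemma finBox K : finite_set (Box K).
Proof. by apply: finite_setX; apply: finite_setX; apply: finite_II. Qed.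

Lemma inBox g M : cpos omega g.1 -> cpos omega g.2 ->
  dg (act g M).1 <= Dint -> dg (act g M).2 <= Dint -> Box KD M.
Proof.
move=> c1 c2 h1 h2; have [b1 b2 b3 b4] := act_bound M c1 c2.
rewrite /Box /KD /=; split; split => /=; lia.
Qed.

Definition Y (bb : V * V) := [set Mg : Mat * (V * V) |
  (unimod Mg.1 /\ GD Mg.2) /\ act Mg.2 Mg.1 = bb].

Lemma finY bb : dg bb.1 <= Dint -> dg bb.2 <= Dint -> finite_set (Y bb).
Proof.
move=> h1 h2; apply: (sub_finite_set _ (finite_setX (finBox KD) finGD)).
move=> [M g] [[dM gG] e]; split => //=.
have [c1 [c2 _]] := gG; rewrite /= in e; apply: (@inBox g M) => //; by rewrite e.
Qed.

Definition indep (x y : V) := exists i j, x ord0 i * y ord0 j != x ord0 j * y ord0 i.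

Lemma indep_neq x y : indep x y -> x <> y.
Proof. by move=> [i [j h]] e; move: h; rewrite e mulrC eqxx. Qed.

Lemma indepL x y : indep x y -> indep x (y - x).
Proof.
move=> [i [j h]]; exists i, j; rewrite !mxE; apply: contra h => /eqP e.
rewrite -subr_eq0; apply/eqP.
have -> : x ord0 i * y ord0 j - x ord0 j * y ord0 i =
  x ord0 i * (y ord0 j - x ord0 j) - x ord0 j * (y ord0 i - x ord0 i) by ring.
by rewrite e subrr.
Qed.

Lemma indepR x y : indep x y -> indep (x - y) y.
Proof.
move=> [i [j h]]; exists i, j; rewrite !mxE; apply: contra h => /eqP e.
rewrite -subr_eq0; apply/eqP.
have -> : x ord0 i * y ord0 j - x ord0 j * y ord0 i =
  (x ord0 i - y ord0 i) * y ord0 j - (x ord0 j - y ord0 j) * y ord0 i by ring.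
by rewrite e subrr.
Qed.

Definition tauL (Mg : Mat * (V * V)) : Mat * (V * V) :=
  (((Mg.1.1.1, (Mg.1.1.2 + Mg.1.1.1)%N), (Mg.1.2.1, (Mg.1.2.2 + Mg.1.2.1)%N)), Mg.2).
Definition tauR (Mg : Mat * (V * V)) : Mat * (V * V) :=
  ((((Mg.1.1.1 + Mg.1.1.2)%N, Mg.1.1.2), ((Mg.1.2.1 + Mg.1.2.2)%N, Mg.1.2.2)), Mg.2).

Lemma bijL x y : set_bij (Y (x, y - x))
  (Y (x, y) `&` [set Mg | (Mg.1.1.1 <= Mg.1.1.2)%N /\ (Mg.1.2.1 <= Mg.1.2.2)%N]) tauL.
Proof.
split.
- move=> [[[a b] [c d]] g] [[dM gG] e] /=; rewrite /act /= in e; case: e => e1 e2.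
  split; last by split; lia.
  split; first split => //.
    by rewrite /unimod /= in dM *; rewrite mulnDr mulnDl; lia.
  rewrite /act /= !mulrnDr e1; congr pair.
  by rewrite addrACA e1 e2 subrK.
- move=> [[[a b] [c d]] g] [[[a' b'] [c' d']] g'] _ _ /= [ea eb ec ed eg].
  have eb' : b = b' by lia. have ed' : d = d' by lia.
  by rewrite ea eb' ec ed' eg.
- move=> [[[a b] [c d]] g] [[[dM gG] e] [/= hab hcd]].
  rewrite /act /= in e; case: e => e1 e2.
  exists ((a, (b - a)%N), (c, (d - c)%N), g); last first.
    by rewrite /tauL /= !subnK.
  split; first split => //.
    rewrite /unimod /= in dM *; rewrite mulnBr mulnBl.
    have : (a * c <= a * d)%N by rewrite leq_mul2l hcd orbT.
    have : (a * c <= b * c)%N by rewrite leq_mul2r hab orbT.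
    lia.
  have eb : g.1 *+ b = g.1 *+ (b - a) + g.1 *+ a by rewrite -mulrnDr subnK.
  have ed : g.2 *+ d = g.2 *+ (d - c) + g.2 *+ c by rewrite -mulrnDr subnK.
  rewrite /act /=; congr pair; first exact: e1.
  by rewrite -e1 -e2 eb ed addrACA addrK.
Qed.

Lemma bijR x y : set_bij (Y (x - y, y))
  (Y (x, y) `&` [set Mg | (Mg.1.1.2 <= Mg.1.1.1)%N /\ (Mg.1.2.2 <= Mg.1.2.1)%N]) tauR.
Proof.
split.
- move=> [[[a b] [c d]] g] [[dM gG] e] /=; rewrite /act /= in e; case: e => e1 e2.
  split; last by split; lia.
  split; first split => //.
    by rewrite /unimod /= in dM *; rewrite mulnDr mulnDl; lia.
  rewrite /act /= !mulrnDr e2; congr pair.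
  by rewrite addrACA e1 e2 subrK.
- move=> [[[a b] [c d]] g] [[[a' b'] [c' d']] g'] _ _ /= [ea eb ec ed eg].
  have ea' : a = a' by lia. have ec' : c = c' by lia.
  by rewrite ea' eb ec' ed eg.
- move=> [[[a b] [c d]] g] [[[dM gG] e] [/= hab hcd]].
  rewrite /act /= in e; case: e => e1 e2.
  exists (((a - b)%N, b), ((c - d)%N, d), g); last first.
    by rewrite /tauR /= !subnK.
  split; first split => //.
    rewrite /unimod /= in dM *; rewrite mulnBr mulnBl.
    have : (b * d <= a * d)%N by rewrite leq_mul2r hab orbT.
    have : (b * d <= b * c)%N by rewrite leq_mul2l hcd orbT.
    lia.
  have ea : g.1 *+ a = g.1 *+ (a - b) + g.1 *+ b by rewrite -mulrnDr subnK.
  have ec : g.2 *+ c = g.2 *+ (c - d) + g.2 *+ d by rewrite -mulrnDr subnK.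
  rewrite /act /=; congr pair; last exact: e2.
  by rewrite -e1 -e2 ea ec addrACA addrK.
Qed.

Lemma claimA (s : nat) x y : cpos omega x -> cpos omega y -> indep x y ->
  dg x + dg y <= s%:Z -> dg x + dg y <= Dint ->
  m x y = \sum_(Mg \in Y (x, y)) Nf Mg.2.
Proof.
elim: s x y => [|s IH] x y cx cy ixy hs hD.
  by move/cposE: cx; move/cposE: cy => *; exfalso; lia.
have neq := indep_neq ixy.
rewrite Hrec //.
move/cposE: (cx) => cx'; move/cposE: (cy) => cy'.
have finYxy : finite_set (Y (x, y)) by apply: finY => /=; lia.
set Y0 := Y (x, y) `&` [set Mg | Mg.1 = Id2].
set YL := Y (x, y) `&` [set Mg | (Mg.1.1.1 <= Mg.1.1.2)%N /\ (Mg.1.2.1 <= Mg.1.2.2)%N].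
set YR := Y (x, y) `&` [set Mg | (Mg.1.1.2 <= Mg.1.1.1)%N /\ (Mg.1.2.2 <= Mg.1.2.1)%N].
have -> : Y (x, y) = Y0 `|` (YL `|` YR).
  apply/seteqP; split; last by move=> Mg [[]|[[]|[]]].
  move=> Mg hY; have [[dM _] _] := hY.
  case: (det1_cases dM) => [h|[h|h]]; [left|right; left|right; right]; by split.
have f0 : finite_set Y0 by apply: sub_finite_set finYxy; apply: subIsetl.
have fL : finite_set YL by apply: sub_finite_set finYxy; apply: subIsetl.
have fR : finite_set YR by apply: sub_finite_set finYxy; apply: subIsetl.
have fLR : finite_set (YL `|` YR) by rewrite finite_setU.
have d0 : Y0 `&` (YL `|` YR) `<=` set0.
  by move=> [M g] [[_ /= eM] [[_ /= [h1 h2]]|[_ /= [h1 h2]]]];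
    rewrite eM /Id2 /= in h1 h2; lia.
have dLR : YL `&` YR `<=` set0.
  move=> [[[a b] [c d]] g] [[[[dM _] _] [/= h1 h2]] [_ [/= h3 h4]]].
  have ea : a = b by lia. have ec : c = d by lia.
  by rewrite /unimod /= ea ec in dM; lia.
have -> : \sum_(i \in Y0 `|` (YL `|` YR)) Nf i.2 =
  \sum_(i \in Y0) Nf i.2 + \sum_(i \in YL) Nf i.2 + \sum_(i \in YR) Nf i.2.
  by rewrite -addrA fsbigU0 // fsbigU0.
have [_ [_ [_ [_ [_ [hdx hdy]]]]]] : True /\ True /\ True /\ True /\ True /\ (dg x <= Dint /\ dg y <= Dint).
  by do 5 split => //; split; lia.
congr (_ + _ + _).
- rewrite (fsbig_widen Y0 [set (Id2, (x, y))]) ?fsbig_set1 //.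
    move=> [M g] [[[dM gG] e] /= eM]; rewrite eM in e *.
    by rewrite /act /= !mulr1n !mulr0n addr0 add0r -surjective_pairing in e; rewrite e.
  move=> _ [-> nY0] /=; apply: Nf0 => /= -[nx ny]; apply: nY0; split => //=.
  split; last by rewrite /act /= !mulr1n !mulr0n addr0 add0r.
  by split => //; do 4 (split => //).
- rewrite (reindex_fsbig tauL (Y (x, y - x)) YL); last exact: bijL.
  case: (pselect (0 < dg (y - x))) => pos.
    by rewrite -IH //; [apply/cposE | apply: indepL | rewrite deg_sub; lia | rewrite deg_sub; lia].
  rewrite Hm0; last by right; lia.
  rewrite fsbig1 // => -[M g] [[dM [c1 [c2 _]]] e] /=.
  exfalso; apply: pos; have [_ ] := act_cpos c1 c2 dM; rewrite e /= => /cposE; done.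
- rewrite (reindex_fsbig tauR (Y (x - y, y)) YR); last exact: bijR.
  case: (pselect (0 < dg (x - y))) => pos.
    by rewrite -IH //; [apply/cposE | apply: indepR | rewrite deg_sub; lia | rewrite deg_sub; lia].
  rewrite Hm0; last by left; lia.
  rewrite fsbig1 // => -[M g] [[dM [c1 [c2 _]]] e] /=.
  exfalso; apply: pos; have [+ _] := act_cpos c1 c2 dM; rewrite e /= => /cposE; done.
Qed.

Local Notation W := (pairing alpha).

Definition P := [set bb : V * V | bb.1 + bb.2 = beta /\ cpos omega bb.1 /\ cpos omega bb.2].

Lemma nonindep_W x y : ~ indep x y -> W x * (dg y)%:~R = W y * (dg x)%:~R.
Proof.
move=> ni.
have h : forall i j, x ord0 i * y ord0 j = x ord0 j * y ord0 i.
  move=> i j; apply/eqP/negPn/negP => hn; apply: ni; by exists i, j.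
rewrite /pairing /deg !rmorph_sum !mulr_suml; apply: eq_bigr => i _.
rewrite !mulr_sumr; apply: eq_bigr => j _.
rewrite !rmorphM /= -!mulrA; congr (_ * _).
rewrite mulrCA [RHS]mulrCA; congr (_ * _); rewrite -!rmorphM /=.
by rewrite h mulrC.
Qed.

Lemma W_zero bb : P bb -> ~ indep bb.1 bb.2 -> W bb.1 = 0.
Proof.
move=> [e [c1 c2]] ni; have := nonindep_W ni.
have : W bb.2 = - W bb.1.
  by apply/eqP; rewrite -addr_eq0 addrC -pairing_add e Hab.
move=> ->; move/cposE: c1 => c1; move/cposE: c2 => c2.
move/eqP; rewrite mulNr -addr_eq0 -mulrDr mulf_eq0 => /orP[/eqP //|].
by rewrite -intrD intr_eq0 => /eqP; lia.
Qed.

Definition Cset := [set Mg : Mat * (V * V) |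
  (unimod Mg.1 /\ GD Mg.2) /\ P (act Mg.2 Mg.1)].

Lemma finC : finite_set Cset.
Proof.
apply: (sub_finite_set _ (finite_setX (finBox KD) finGD)).
move=> [M g] /= [[dM gG] [e [c1 c2]]]; split => //.
have [g1 [g2 _]] := gG; move/cposE: c1 => c1; move/cposE: c2 => c2.
have ed : dg (act g M).1 + dg (act g M).2 = Dint by rewrite -deg_add e.
have c1' : 0 < dg (act g M).1 := c1. have c2' : 0 < dg (act g M).2 := c2.
apply: (@inBox g M) => //; lia.
Qed.

Lemma S1_eq : \sum_(bb \in P) (W bb.1 * W bb.2 * m bb.1 bb.2)
  = \sum_(Mg \in Cset) (W (act Mg.2 Mg.1).1 * W (act Mg.2 Mg.1).2 * Nf Mg.2).
Proof.
transitivity (\sum_(bb \in P) \sum_(Mg \in [set Mg : Mat * (V * V) |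
   (unimod Mg.1 /\ GD Mg.2) /\ act Mg.2 Mg.1 = bb]) (W bb.1 * W bb.2 * Nf Mg.2)).
  apply: eq_fsbigr => -[x y]; rewrite in_setE => hP.
  have [/= e [cx cy]] := hP.
  move/cposE: (cx) => cx'; move/cposE: (cy) => cy'.
  have ed : dg x + dg y = Dint by rewrite -deg_add e.
  case: (pselect (indep x y)) => ixy.
    rewrite (@claimA `|Dint|%N x y) //; try lia.
    by rewrite mulr_fsumr.
  have W0 := W_zero hP ixy; rewrite /= in W0.
  by rewrite W0 !mul0r fsbig1 // => Mg _; rewrite mul0r.
exact: (@fsum_fiber F _ _ P [set Mg : Mat * (V * V) | unimod Mg.1 /\ GD Mg.2]
   (fun Mg => act Mg.2 Mg.1) (fun bb Mg => W bb.1 * W bb.2 * Nf Mg.2) finC).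
Qed.

Definition Kset := [set k : nat * nat | (0 < k.1)%N /\ (0 < k.2)%N /\ coprime k.1 k.2].
Definition Pk (k : nat * nat) := [set bb : V * V |
  bb.1 + bb.2 = beta /\ cpos omega bb.1 /\ cpos omega bb.2
  /\ dvdv k.1 bb.1 /\ dvdv k.2 bb.2].
Definition Tk (k : nat * nat) (bb : V * V) :=
  pairing alpha bb.1 * pairing alpha bb.2 / ((k.1 ^ 2 * k.2 ^ 2)%N)%:R
  * gpair G (n (divv k.1 bb.1)) (n (divv k.2 bb.2)).
Definition Pk' k := [set bb : V * V | Pk k bb /\ GD (divv k.1 bb.1, divv k.2 bb.2)].
Definition S2set := [set q : (nat * nat) * (V * V) | Kset q.1 /\ Pk' q.1 q.2].
Definition psi (Mg : Mat * (V * V)) : (nat * nat) * (V * V) :=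
  (((Mg.1.1.1 + Mg.1.1.2)%N, (Mg.1.2.1 + Mg.1.2.2)%N),
   (Mg.2.1 *+ (Mg.1.1.1 + Mg.1.1.2), Mg.2.2 *+ (Mg.1.2.1 + Mg.1.2.2))).

Lemma act_sum g M : (act g M).1 + (act g M).2 =
  g.1 *+ (M.1.1 + M.1.2) + g.2 *+ (M.2.1 + M.2.2).
Proof. by rewrite /act /= !mulrnDr addrACA. Qed.

Lemma divv_pos k c : (0 < k)%N -> dvdv k c -> cpos omega c ->
  cpos omega (divv k c) /\ dg (divv k c) <= dg c.
Proof.
move=> k0 dv /cposE cc.
have E : dg c = dg (divv k c) *+ k by rewrite -deg_muln divvK.
have pp : 0 < dg (divv k c) by rewrite -(pmulrn_lgt0 _ k0) -E.
split; first exact/cposE.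
by rewrite E; apply: le_mulrn.
Qed.

Lemma bijPsi : set_bij Cset S2set psi.
Proof.
split.
- move=> [[[a b] [c d]] g] [[dM gG] [e [c1 c2]]] /=.
  have [/= a0 d0] := det1_pos dM.
  have [g1 [g2 [dg1 [dg2 _]]]] := gG.
  split; first by split => /=; [lia | split; [lia | exact: (det1_coprime dM)]].
  have pk1 : (0 < a + b)%N by lia. have pk2 : (0 < c + d)%N by lia.
  split; last by rewrite !divv_muln // -surjective_pairing; exact: gG.
  split; first by rewrite -act_sum.
  move/cposE: (g1) => g1'; move/cposE: (g2) => g2'.
  split; first by apply/cposE; rewrite deg_muln pmulrn_lgt0 //; lia.
  split; first by apply/cposE; rewrite deg_muln pmulrn_lgt0 //; lia.
  by split; apply: dvdv_muln.
- move=> [[[a b] [c d]] g] [[[a' b'] [c' d']] g'] /set_mem [[dM _] _] /set_mem [[dM' _] _] /= [e1 e2 e3 e4].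
  have eM := det1_uniq dM dM' e1 e2; case: eM => ea eb ec ed.
  rewrite /= in e1 e2 e3 e4; subst a' b' c' d'.
  have [/= a0 d0] := det1_pos dM.
  have eg1 : g.1 = g'.1 by apply: (@muln_inj _ (a + b)%N) => //; lia.
  have eg2 : g.2 = g'.2 by apply: (@muln_inj _ (c + d)%N) => //; lia.
  by rewrite [g]surjective_pairing [g']surjective_pairing eg1 eg2.
- move=> [[k1 k2] [b1 b2]] [[/= k10 [k20 cop]] [[/= e [cb1 [cb2 [dv1 dv2]]]] gG]].
  have [[[a b] [c d]] [dM [/= ek1 ek2]]] := det1_exists k10 k20 cop.
  exists ((a, b), (c, d), (divv k1 b1, divv k2 b2)); last first.
    by rewrite /psi /= ek1 ek2 !divvK.
  split; first by split.
  have [g1 [g2 _]] := gG.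
  have [ca cb] := act_cpos (g := (divv k1 b1, divv k2 b2)) g1 g2 dM.
  split; last by split.
  by rewrite act_sum /= ek1 ek2 !divvK.
Qed.

Lemma finS2 : finite_set S2set.
Proof.
apply: (sub_finite_set _ (finite_image psi finC)).
by have [_ _ h] := bijPsi.
Qed.

Lemma Tk_psi Mg : Cset Mg ->
  Tk (psi Mg).1 (psi Mg).2 = W (act Mg.2 Mg.1).1 * W (act Mg.2 Mg.1).2 * Nf Mg.2.
Proof.
case: Mg => [[[a b] [c d]] g] [[dM gG] [e _]].
have [/= a0 d0] := det1_pos dM.
rewrite /Tk /psi /= !divv_muln; try lia.
congr (_ * _).
rewrite !pairing_muln /act /= !pairing_add !pairing_muln.
apply: weight_id; first exact: dM.
have e' : (act g ((a, b), (c, d))).1 + (act g ((a, b), (c, d))).2 = beta := e.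
by rewrite -!pairing_muln -pairing_add -(act_sum g ((a, b), (c, d))) e' Hab.
Qed.

Lemma S2_eq : \sum_(k \in Kset) \sum_(bb \in Pk k) Tk k bb
  = \sum_(Mg \in Cset) (W (act Mg.2 Mg.1).1 * W (act Mg.2 Mg.1).2 * Nf Mg.2).
Proof.
transitivity (\sum_(k \in Kset) \sum_(bb \in Pk' k) Tk k bb).
  apply: eq_fsbigr => k; rewrite in_setE => -[k10 [k20 _]].
  apply/esym/fsbig_widen; first by move=> bb [].
  move=> [b1 b2] [[e [cb1 [cb2 [dv1 dv2]]]] nG] /=.
  rewrite /Tk /=; apply/eqP; rewrite mulf_eq0; apply/orP; right; apply/eqP.
  apply: (Nf0 (g := (divv k.1 b1, divv k.2 b2))) => -[nz1 nz2]; apply: nG.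
  have [p1 l1] := divv_pos k10 dv1 cb1.
  have [p2 l2] := divv_pos k20 dv2 cb2.
  move/cposE: (cb1) => q1; move/cposE: (cb2) => q2.
  have ed : dg b1 + dg b2 = Dint by rewrite -deg_add e.
  rewrite /= in p1 l1 p2 l2 q1 q2 nz1 nz2 *.
  split => //; split => //; rewrite /=; split => //; split; first lia.
  by split; first lia.
rewrite (@fsum_sigma F _ _ Kset Pk' Tk finS2).
rewrite (reindex_fsbig psi Cset S2set); last exact: bijPsi.
by apply: eq_fsbigr => Mg; rewrite in_setE => hC; rewrite Tk_psi.
Qed.
End Main.


Unset Implicit Arguments.

Theorem lemma2p3 (F : numFieldType) (r p : nat)
  (omega : 'rV[int]_r)                      (* ample class *)
  (cup : 'I_r -> 'I_r -> 'rV[F]_p)          (* cup product H^2 x H^2 -> H^4 *)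
  (G : 'M[int]_p)                           (* g_ab = int_X S_a S_b *)
  (c2 : 'rV[int]_p)                         (* c_2(X) mod torsion *)
  (gw : 'rV[int]_r -> 'I_p -> F)            (* gw b a = GW_{0,b}(S_a) *)
  (n : 'rV[int]_r -> 'I_p -> F)             (* n b a = n_{0,b}(S_a) *)
  (m : 'rV[int]_r -> 'rV[int]_r -> F)       (* meeting invariants *)
  (alpha : 'rV[F]_r) (beta : 'rV[int]_r) :
  (* Poincare duality: intersection form on free part of H^4 *)
  G^T = G -> G \in unitmx ->
  (* Gromov compactness: finitely many classes of bounded degree carry
     nonzero genus 0 invariants *)
  (forall D : int, finite_set
     [set b : 'rV[int]_r | cpos omega b /\ deg omega b <= D /\
                          exists a, gw b a != 0]) ->
  (* definition of n_{0,b} via the multiple cover formula *)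
  (forall b, cpos omega b -> forall a,
     gw b a = \sum_(dc \in [set dc : nat * 'rV[int]_r |
                    (0 < dc.1)%N /\ cpos omega dc.2 /\ dc.2 *+ dc.1 = b])
                (dc.1 ^ 2)%:R^-1 * n dc.2 a) ->
  (* characterization of the meeting invariants *)
  (forall b1 b2, m b1 b2 = m b2 b1) ->
  (forall b1 b2, deg omega b1 <= 0 \/ deg omega b2 <= 0 -> m b1 b2 = 0) ->
  (forall b1 b2, cpos omega b1 -> cpos omega b2 -> b1 <> b2 ->
     m b1 b2 = gpair G (n b1) (n b2) + m b1 (b2 - b1) + m (b1 - b2) b2) ->
  (forall b, cpos omega b ->
     m b b = linH4 (n b) (map_mx (fun z : int => z%:~R) c2)
             + gpair G (n b) (n b)
             - \sum_(bb \in [set bb : 'rV[int]_r * 'rV[int]_r |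
                      bb.1 + bb.2 = b /\ cpos omega bb.1 /\ cpos omega bb.2])
                 m bb.1 bb.2) ->
  (* alpha . beta = 0 *)
  pairing alpha beta = 0 ->
  (linH4 (n beta) (sq_class cup alpha)
     = 2^-1 * \sum_(bb \in [set bb : 'rV[int]_r * 'rV[int]_r |
                   bb.1 + bb.2 = beta /\ cpos omega bb.1 /\ cpos omega bb.2])
                (pairing alpha bb.1 * pairing alpha bb.2 * m bb.1 bb.2))
  <->
  (linH4 (n beta) (sq_class cup alpha)
     = 2^-1 * \sum_(k \in [set k : nat * nat |
                   (0 < k.1)%N /\ (0 < k.2)%N /\ coprime k.1 k.2])
              \sum_(bb \in [set bb : 'rV[int]_r * 'rV[int]_r |
                   bb.1 + bb.2 = beta /\ cpos omega bb.1 /\ cpos omega bb.2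
                   /\ dvdv k.1 bb.1 /\ dvdv k.2 bb.2])
                (pairing alpha bb.1 * pairing alpha bb.2
                   / ((k.1 ^ 2 * k.2 ^ 2)%N)%:R
                   * gpair G (n (divv k.1 bb.1)) (n (divv k.2 bb.2)))).
Proof.
move=> _ _ Hgrom Hmc _ Hm0 Hrec _ Hab.
have E := etrans (S1_eq Hgrom Hmc Hm0 Hrec Hab) (esym (S2_eq G Hgrom Hmc Hab)).
by split => h; rewrite h; congr (_ * _); [exact: E | exact: (esym E)].
Qed.
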